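(* Let $T$ be a complete countable theory and suppose the formula $\varphi(\bar x;\bar y)$ has the independence property for $T$. Then there are a countable model $M\models T$ and a sequence $\langle \bar b_n : n<\omega\rangle$ of tuples from $M$ with $\ell(\bar b_n)=\ell(\bar y)$ such that: (i) $\varphi$ has the independence property over this sequence, i.e. for all finite disjoint $A,B\subseteq\omega$, $M\models\exists\bar x\,\big(\bigwedge_{n\in A}\varphi(\bar x,\bar b_n)\wedge\bigwedge_{n\in B}\neg\varphi(\bar x,\bar b_n)\big)$; and (ii) for every $\bar a\in{}^{\ell(\bar x)}M$ there is a truth value $\mathbf{t}\in\{0,1\}$ such that for all but finitely many $n$, $M\models\varphi[\bar a,\bar b_n]^{\mathbf t}$.
   Context: For a formula $\psi$, $\psi^1$ denotes $\psi$ and $\psi^0$ denotes $\neg\psi$. *)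

(* Defs.v *)
From mathcomp Require Import all_boot.
Set Implicit Arguments. Unset Strict Implicit. Unset Printing Implicit Defensive.

Record signature := Signature {
  fsym : countType;  fari : fsym -> nat;
  rsym : countType;  rari : rsym -> nat }.

Section Syntax.
Variable L : signature.

Inductive fterm (n : nat) : Type :=
| TVar : 'I_n -> fterm n
| TApp (f : fsym L) : ('I_(fari f) -> fterm n) -> fterm n.

Inductive fform : nat -> Type :=
| FEq  n : fterm n -> fterm n -> fform n
| FRel n (r : rsym L) : ('I_(rari r) -> fterm n) -> fform n
| FBot n : fform n
| FNot n : fform n -> fform n
| FAnd n : fform n -> fform n -> fform n
| FOr  n : fform n -> fform n -> fform n
| FImp n : fform n -> fform n -> fform n
| FAll n : fform n.+1 -> fform n
| FEx  n : fform n.+1 -> fform n.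

Definition sentence := fform 0.
Definition theory := sentence -> Prop.
End Syntax.

Record structure (L : signature) := Structure {
  carrier :> Type;
  witness : carrier;
  fint : forall f : fsym L, ('I_(fari f) -> carrier) -> carrier;
  rint : forall r : rsym L, ('I_(rari r) -> carrier) -> Prop }.

Section Semantics.
Variables (L : signature) (M : structure L).

Fixpoint teval n (t : fterm L n) (e : 'I_n -> M) : M :=
  match t with
  | TVar i => e i
  | TApp f ts => @fint L M f (fun j => teval (ts j) e)
  end.

Definition scons n (x : M) (e : 'I_n -> M) : 'I_n.+1 -> M :=
  fun i => match unlift ord0 i with None => x | Some j => e j end.

Fixpoint sat n (phi : fform L n) : ('I_n -> M) -> Prop :=
  match phi in fform _ n return ('I_n -> M) -> Prop with
  | FEq _ t u => fun e => teval t e = teval u e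
  | FRel _ r ts => fun e => @rint L M r (fun j => teval (ts j) e)
  | FBot _ => fun _ => False
  | FNot _ p => fun e => ~ sat p e
  | FAnd _ p q => fun e => sat p e /\ sat q e
  | FOr _ p q => fun e => sat p e \/ sat q e
  | FImp _ p q => fun e => sat p e -> sat q e
  | FAll _ p => fun e => forall x : M, sat p (scons x e)
  | FEx _ p => fun e => exists x : M, sat p (scons x e)
  end.

(* truth of a sentence ('I_0 is empty, so all assignments agree) *)
Definition sat_sentence (s : sentence L) : Prop := forall e : 'I_0 -> M, sat s e.

Definition is_model (T : theory L) : Prop := forall s, T s -> sat_sentence s.

Definition countable_structure : Prop := exists f : M -> nat, injective f.

(* the assignment (a, b) for a formula phi(x;y) with l(x) = k, l(y) = m:
   variables 0..k-1 are x, variables k..k+m-1 are y *)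
Definition pair_env k m (a : 'I_k -> M) (b : 'I_m -> M) : 'I_(k + m) -> M :=
  fun i => match split i with inl j => a j | inr j => b j end.

Definition sat_xy k m (phi : fform L (k + m)) (a : 'I_k -> M) (b : 'I_m -> M) :=
  sat phi (pair_env a b).
End Semantics.

(* T is complete: it has a model, and decides every sentence
   (semantically: every sentence or its negation holds in all models of T) *)
Definition complete_theory (L : signature) (T : theory L) : Prop :=
  (exists M : structure L, is_model M T) /\
  forall s : sentence L,
    (forall M : structure L, is_model M T -> sat_sentence M s) \/
    (forall M : structure L, is_model M T -> sat_sentence M (FNot s)).

Definition has_IP (L : signature) (T : theory L) k m (phi : fform L (k + m)) : Prop :=
  forall n : nat, exists (M : structure L), is_model M T /\
    exists b : 'I_n -> 'I_m -> M,
      forall S : {set 'I_n}, exists a : 'I_k -> M,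
        forall i : 'I_n, sat_xy phi a (b i) <-> i \in S.

(* Main.v *)
Require Import Defs.
From mathcomp Require Import all_boot.
From mathcomp Require boolp classical_sets filter.
From Stdlib Require Import ClassicalEpsilon FunctionalExtensionality PropExtensionality ProofIrrelevance.
Set Implicit Arguments. Unset Strict Implicit. Unset Printing Implicit Defensive.

Lemma ultra_nat : exists U : (nat -> Prop) -> Prop,
  (U (fun _ => True)) /\
  (forall X Y : nat -> Prop, (forall j, X j -> Y j) -> U X -> U Y) /\
  (forall X Y : nat -> Prop, U X -> U Y -> U (fun j => X j /\ Y j)) /\
  (~ U (fun _ => False)) /\
  (forall X : nat -> Prop, U X \/ U (fun j => ~ X j)) /\
  (forall N, U (fun j => (N <= j)%N)).
Proof.
have [G [GU sub]] := filter.ultraFilterLemma (@filter.eventually_filter).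
exists G; split; [|split; [|split; [|split; [|split]]]].
- exact: (@filter.filterT _ G).
- by move=> X Y XY GX; apply: (filter.filterS _ GX) => j /XY.
- move=> X Y GX GY; have := filter.filterI GX GY. rewrite /classical_sets.setI /classical_sets.mkset. exact.
- move=> H; apply: (@filter.filter_not_empty _ G _); exact: H.
- by move=> X; apply: filter.in_ultra_setVsetC.
- move=> N; apply: sub; exists N => //.
Qed.

Section Ultra.
Variable L : signature.
Variable M : nat -> structure L.
Variable U : (nat -> Prop) -> Prop.
Hypothesis UT : U (fun _ => True).
Hypothesis US : forall X Y : nat -> Prop, (forall j, X j -> Y j) -> U X -> U Y.
Hypothesis UI : forall X Y : nat -> Prop, U X -> U Y -> U (fun j => X j /\ Y j).
Hypothesis U0 : ~ U (fun _ => False).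
Hypothesis UC : forall X : nat -> Prop, U X \/ U (fun j => ~ X j).

Lemma UM X Y : U X -> (forall j, X j -> Y j) -> U Y.
Proof. by move=> H1 H2; apply: (US H2 H1). Qed.
Arguments UM {X Y}.

Definition prodM := forall j, carrier (M j).
Definition equivU (f g : prodM) := U (fun j => f j = g j).
Definition canon (f : prodM) : prodM :=
  epsilon (inhabits (fun j => witness (M j))) (fun g => equivU f g).

Lemma equiv_refl f : equivU f f.
Proof. exact: (UM UT). Qed.
Lemma equiv_sym f g : equivU f g -> equivU g f.
Proof. by apply: US. Qed.
Lemma equiv_trans f g h : equivU f g -> equivU g h -> equivU f h.
Proof. by move=> H1 H2; apply: (UM (UI H1 H2)) => j [-> ->]. Qed.

Lemma canon_spec f : equivU f (canon f).
Proof. by apply: (epsilon_spec _ (fun g => equivU f g)); exists f; apply: equiv_refl. Qed.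

Lemma canon_eq f g : equivU f g -> canon f = canon g.
Proof.
move=> H; rewrite /canon; f_equal; apply: functional_extensionality => h.
apply: propositional_extensionality; split => H2.
  exact: equiv_trans (equiv_sym H) H2.
exact: equiv_trans H H2.
Qed.

Lemma canon_idem f : canon (canon f) = canon f.
Proof. exact/canon_eq/equiv_sym/canon_spec. Qed.

Definition Ult := {f : prodM | canon f = f}.
Definition cls (f : prodM) : Ult := exist _ (canon f) (canon_idem f).

Lemma cls_val f : equivU (proj1_sig (cls f)) f.
Proof. exact/equiv_sym/canon_spec. Qed.

Lemma Ult_eq (x y : Ult) : equivU (proj1_sig x) (proj1_sig y) -> x = y.
Proof.
case: x => f hf; case: y => g hg /= H.
have efg : f = g by rewrite -hf -hg; apply: canon_eq.
subst g; f_equal; apply: proof_irrelevance.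
Qed.

Definition UltS : structure L :=
  @Structure L Ult (cls (fun j => witness (M j)))
    (fun f args => cls (fun j => fint (fun k => proj1_sig (args k) j)))
    (fun r args => U (fun j => rint (fun k => proj1_sig (args k) j))).

Lemma U_all (I : finType) (X : I -> nat -> Prop) :
  (forall i, U (X i)) -> U (fun j => forall i, X i j).
Proof.
move=> H.
suff : U (fun j => forall i, i \in enum I -> X i j).
  by move=> H0; apply: (UM H0) => j Hj i; apply: Hj; rewrite mem_enum.
elim: (enum I) => [|i s IH]; first by apply: (UM UT) => j _ i.
apply: (UM (UI (H i) IH)) => j [H1 H2] i'; rewrite in_cons => /orP [/eqP -> //|].
exact: H2.
Qed.

Definition ev n (e : 'I_n -> UltS) (j : nat) : 'I_n -> M j :=
  fun v => proj1_sig (e v) j.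

Lemma teval_U n (t : fterm L n) (e : 'I_n -> UltS) :
  U (fun j => proj1_sig (teval t e) j = teval t (ev e j)).
Proof.
elim: t => [v|f ts IH] /=; first exact: equiv_refl.
apply: (UM (UI (cls_val (fun j => fint (fun k => proj1_sig (teval (ts k) e) j))) (U_all IH))) => j /= [-> H].
by f_equal; apply: functional_extensionality => k; apply: H.
Qed.

Lemma ev_scons n (x : UltS) (e : 'I_n -> UltS) j :
  ev (scons x e) j = scons (proj1_sig x j) (ev e j).
Proof.
by apply: functional_extensionality => v; rewrite /ev /scons; case: (unlift ord0 v).
Qed.

Lemma Unot X : ~ U X <-> U (fun j => ~ X j).
Proof.
split; first by move=> H; case: (UC X) => // H1; exfalso; apply: H.
move=> H1 H2; apply: U0; apply: (UM (UI H2 H1)) => j []; by [].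
Qed.

Lemma los n (p : fform L n) (e : 'I_n -> UltS) :
  sat p e <-> U (fun j => sat p (ev e j)).
Proof.
elim: p e => {n} [n t u|n r ts|n|n p IH|n p IHp q IHq|n p IHp q IHq|n p IHp q IHq
  |n p IH|n p IH] e /=.
- split => [H|H].
    apply: (UM (UI (teval_U t e) (teval_U u e))) => j [<- <-]; by rewrite H.
  apply: Ult_eq; apply: (UM (UI H (UI (teval_U t e) (teval_U u e)))) => j [H1 [-> ->]] //.
- have H := U_all (fun k => teval_U (ts k) e).
  split => H2.
    apply: (UM (UI H H2)) => j [H3]; congr (rint _); apply: functional_extensionality => k.
    exact: H3.
  apply: (UM (UI H H2)) => j [H3]; congr (rint _); apply: functional_extensionality => k.
  by rewrite H3.
- split => // H; exact: U0.
- rewrite IH; exact: Unot.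
- rewrite IHp IHq; split; first by case=> H1 H2; apply: UI.
  by move=> H; split; apply: (UM H) => j [].
- rewrite IHp IHq; split.
    by case=> H; apply: (UM H) => j Hj; [left|right].
  move=> H; case: (UC (fun j => sat p (ev e j))) => H1; first by left.
  by right; apply: (UM (UI H H1)) => j [[]].
- rewrite IHp IHq; split.
    move=> H; case: (UC (fun j => sat p (ev e j))) => H1.
      by apply: (UM (H H1)) => j H2 _.
    by apply: (UM H1) => j H2 H3.
  by move=> H H1; apply: (UM (UI H H1)) => j [H2 H3]; apply: H2.
- split.
    move=> H; case: (UC (fun j => forall y, sat p (scons y (ev e j)))) => // H1.
    pose F : prodM := fun j => epsilon (inhabits (witness (M j)))
         (fun y => ~ sat p (scons y (ev e j))).
    have := H (cls F); rewrite IH => H2.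
    exfalso; apply: U0; apply: (UM (UI (UI H2 (cls_val F)) H1)) => j [[H3 H4] H5].
    have : exists y, ~ sat p (scons y (ev e j)).
      apply: NNPP => H7; apply: H5 => y; apply: NNPP => H8; apply: H7; exists y.
      exact: H8.
    move/(epsilon_spec (inhabits (witness (M j)))); rewrite -/(F j) -H4.
    by rewrite ev_scons in H3.
  move=> H x; rewrite IH; apply: (UM H) => j Hj; rewrite ev_scons; exact: Hj.
- split.
    case=> x; rewrite IH => H; apply: (UM H) => j Hj; exists (proj1_sig x j).
    by rewrite -ev_scons.
  move=> H.
  pose F : prodM := fun j => epsilon (inhabits (witness (M j)))
         (fun y => sat p (scons y (ev e j))).
  exists (cls F); rewrite IH; apply: (UM (UI H (cls_val F))) => j [H1 H2].
  rewrite ev_scons H2; exact: (epsilon_spec _ _ H1).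
Qed.

End Ultra.

Section Enc.
Variable L : signature.
Notation tree := (GenTree.tree nat).
Notation Node := GenTree.Node.
Notation Leaf := GenTree.Leaf.

Fixpoint seq_opt A (s : seq (option A)) : option (seq A) :=
  match s with
  | [::] => Some [::]
  | o :: s' => match o, seq_opt s' with Some a, Some l => Some (a :: l) | _, _ => None end
  end.

Lemma seq_opt_map A B (g : A -> B) s : seq_opt [seq Some (g x) | x <- s] = Some (map g s).
Proof. by elim: s => //= x s ->. Qed.

Definition mk_fun k A (l : seq A) : option ('I_k -> A) :=
  match (insub l : option (k.-tuple A)) with
  | Some t => Some (fun i => tnth t i)
  | None => None
  end.

Lemma mk_fun_map k A (g : 'I_k -> A) : mk_fun k [seq g i | i <- enum 'I_k] = Some g.
Proof.
rewrite /mk_fun; case: insubP => [t _ Ht|]; last by rewrite size_map size_enum_ord eqxx.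
congr Some; apply: functional_extensionality => i.
by rewrite (tnth_nth (g i)) Ht (nth_map i) ?size_enum_ord // nth_ord_enum.
Qed.

Fixpoint enc_term n (t : fterm L n) : tree :=
  match t with
  | TVar i => Node 0 [:: Leaf (nat_of_ord i)]
  | TApp f ts => Node 1 (Leaf (pickle f) :: [seq enc_term (ts i) | i <- enum 'I_(fari f)])
  end.

Fixpoint dec_term n (t : tree) {struct t} : option (fterm L n) :=
  match t with
  | Node 0 [:: Leaf i] => omap (@TVar L n) (insub i)
  | Node 1 (Leaf p :: cs) =>
     match unpickle p with
     | Some f => match seq_opt (map (dec_term n) cs) with
                 | Some l => omap (@TApp L n f) (mk_fun (fari f) l)
                 | None => None end
     | None => None end
  | _ => None
  end.

Lemma enc_termK n (t : fterm L n) : dec_term n (enc_term t) = Some t.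
Proof.
elim: t => [i|f ts IH] /=; first by rewrite valK.
rewrite pickleK -map_comp.
rewrite (eq_map (g := fun i => Some (ts i))); last by move=> i /=; rewrite IH.
by rewrite seq_opt_map mk_fun_map.
Qed.

Fixpoint enc_form n (p : fform L n) : tree :=
  match p with
  | @FEq _ _ t u => Node 0 [:: enc_term t; enc_term u]
  | @FRel _ _ r ts => Node 1 (Leaf (pickle r) :: [seq enc_term (ts i) | i <- enum 'I_(rari r)])
  | @FBot _ _ => Node 2 [::]
  | @FNot _ _ q => Node 3 [:: enc_form q]
  | @FAnd _ _ q r => Node 4 [:: enc_form q; enc_form r]
  | @FOr _ _ q r => Node 5 [:: enc_form q; enc_form r]
  | @FImp _ _ q r => Node 6 [:: enc_form q; enc_form r]
  | @FAll _ _ q => Node 7 [:: enc_form q]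
  | @FEx _ _ q => Node 8 [:: enc_form q]
  end.

Fixpoint dec_form (t : tree) (n : nat) {struct t} : option (fform L n) :=
  match t with
  | Node 0 [:: a; b] => match dec_term n a, dec_term n b with
                        | Some x, Some y => Some (FEq x y) | _, _ => None end
  | Node 1 (Leaf p :: cs) =>
     match unpickle p with
     | Some r => match seq_opt (map (dec_term n) cs) with
                 | Some l => omap (@FRel L n r) (mk_fun (rari r) l)
                 | None => None end
     | None => None end
  | Node 2 [::] => Some (FBot L n)
  | Node 3 [:: a] => omap (@FNot L n) (dec_form a n)
  | Node 4 [:: a; b] => match dec_form a n, dec_form b n with
                        | Some x, Some y => Some (FAnd x y) | _, _ => None end
  | Node 5 [:: a; b] => match dec_form a n, dec_form b n with
                        | Some x, Some y => Some (FOr x y) | _, _ => None end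
  | Node 6 [:: a; b] => match dec_form a n, dec_form b n with
                        | Some x, Some y => Some (FImp x y) | _, _ => None end
  | Node 7 [:: a] => omap (@FAll L n) (dec_form a n.+1)
  | Node 8 [:: a] => omap (@FEx L n) (dec_form a n.+1)
  | _ => None
  end.

Lemma enc_formK n (p : fform L n) : dec_form (enc_form p) n = Some p.
Proof.
elim: p => {n} [n t u|n r ts|n|n p IH|n p IHp q IHq|n p IHp q IHq|n p IHp q IHq
  |n p IH|n p IH] /=; rewrite ?IH ?IHp ?IHq ?enc_termK //.
rewrite pickleK -map_comp.
rewrite (eq_map (g := fun i => Some (ts i))); last by move=> i /=; rewrite enc_termK.
by rewrite seq_opt_map mk_fun_map.
Qed.
End Enc.

Section Skolem.
Variable L : signature.
Variable M : structure L.
Variable base : nat -> M.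
Notation tree := (GenTree.tree nat).
Notation Node := GenTree.Node.
Notation Leaf := GenTree.Leaf.

Definition sk n (p : fform L n.+1) (e : 'I_n -> M) : M :=
  epsilon (inhabits (witness M)) (fun x => sat p (scons x e)).

Lemma sk_spec n (p : fform L n.+1) (e : 'I_n -> M) :
  (exists x, sat p (scons x e)) -> sat p (scons (sk p e) e).
Proof. exact: epsilon_spec. Qed.

Fixpoint interp (t : tree) : M :=
  match t with
  | Node 0 [:: Leaf i] => base i
  | Node 1 (Leaf n :: tp :: cs) =>
      match dec_form L tp n.+1 with
      | Some p => sk p (fun i : 'I_n => nth (witness M) (map interp cs) i)
      | None => witness M
      end
  | _ => witness M
  end.

Definition inN (x : M) := exists t, interp t = x.
Definition Nc := {x : M | inN x}.

Lemma base_in i : inN (base i).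
Proof. by exists (Node 0 [:: Leaf i]). Qed.

Lemma wit_in : inN (witness M).
Proof. by exists (Node 2 [::]). Qed.

Lemma sk_in n (p : fform L n.+1) (e : 'I_n -> Nc) : inN (sk p (fun i => proj1_sig (e i))).
Proof.
pose T i := epsilon (inhabits (Leaf 0)) (fun t => interp t = proj1_sig (e i)).
have HT i : interp (T i) = proj1_sig (e i).
  exact: (epsilon_spec _ (fun t => interp t = proj1_sig (e i)) (proj2_sig (e i))).
exists (Node 1 (Leaf n :: enc_form p :: [seq T i | i <- enum 'I_n])).
rewrite /= enc_formK; congr sk; apply: functional_extensionality => i.
by rewrite -map_comp (nth_map i) ?size_enum_ord // nth_ord_enum /= HT.
Qed.

Definition fq (f : Defs.fsym L) : fform L (fari f).+1 :=
  FEq (@TVar L _ ord0) (@TApp L _ f (fun k => @TVar L _ (lift ord0 k))).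

Lemma scons_lift n (x : M) (e : 'I_n -> M) k : scons x e (lift ord0 k) = e k.
Proof. by rewrite /scons liftK. Qed.

Lemma scons0 n (x : M) (e : 'I_n -> M) : scons x e ord0 = x.
Proof. by rewrite /scons unlift_none. Qed.

Lemma fint_in (f : Defs.fsym L) (args : 'I_(fari f) -> Nc) :
  inN (fint (fun k => proj1_sig (args k))).
Proof.
have [t Ht] := sk_in (fq f) args.
exists t; rewrite Ht.
have := @sk_spec _ (fq f) (fun k => proj1_sig (args k)).
rewrite /= scons0 => H; rewrite H.
  by congr fint; apply: functional_extensionality => k; rewrite scons_lift.
exists (fint (fun k => proj1_sig (args k))).
by rewrite scons0; congr fint; apply: functional_extensionality => k; rewrite scons_lift.
Qed.

Definition NS : structure L :=
  @Structure L Nc (exist _ (witness M) wit_in)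
    (fun f args => exist _ _ (fint_in args))
    (fun r args => rint (fun k => proj1_sig (args k))).

Definition vN n (e : 'I_n -> NS) : 'I_n -> M := fun i => proj1_sig (e i).

Lemma teval_N n (t : fterm L n) (e : 'I_n -> NS) :
  proj1_sig (teval t e) = teval t (vN e).
Proof.
elim: t => [v|f ts IH] //=.
by congr fint; apply: functional_extensionality => k; rewrite IH.
Qed.

Lemma vN_scons n (x : NS) (e : 'I_n -> NS) :
  vN (scons x e) = scons (proj1_sig x) (vN e).
Proof.
by apply: functional_extensionality => v; rewrite /vN /scons; case: (unlift ord0 v).
Qed.

Lemma N_eq (x y : NS) : proj1_sig x = proj1_sig y -> x = y.
Proof.
case: x => x hx; case: y => y hy /= exy; subst y; f_equal; apply: proof_irrelevance.
Qed.

Lemma tv n (p : fform L n) (e : 'I_n -> NS) : sat p e <-> sat p (vN e).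
Proof.
elim: p e => {n} [n t u|n r ts|n|n p IH|n p IHp q IHq|n p IHp q IHq|n p IHp q IHq
  |n p IH|n p IH] e /=.
- rewrite -!teval_N; split; first by move->.
  exact: N_eq.
- have -> : (fun k => proj1_sig (teval (ts k) e)) = (fun k => teval (ts k) (vN e)).
    by apply: functional_extensionality => k; rewrite teval_N.
  by [].
- by [].
- by rewrite IH.
- by rewrite IHp IHq.
- by rewrite IHp IHq.
- by rewrite IHp IHq.
- split.
    move=> H y; apply: NNPP => Hy.
    have Hin := sk_in (FNot p) e.
    have := H (exist _ _ Hin); rewrite IH vN_scons /= => H2.
    have : sat (FNot p) (scons (sk (FNot p) (vN e)) (vN e)).
      by apply: sk_spec; exists y.
    by [].
  move=> H x; rewrite IH vN_scons; exact: H.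
- split.
    by case=> x; rewrite IH vN_scons => H; exists (proj1_sig x).
  move=> H; exists (exist _ _ (sk_in p e)); rewrite IH vN_scons /=.
  exact: sk_spec.
Qed.

Lemma N_countable : countable_structure NS.
Proof.
pose T (x : NS) := epsilon (inhabits (Leaf 0)) (fun t => interp t = proj1_sig x).
have HT (x : NS) : interp (T x) = proj1_sig x.
  exact: (epsilon_spec _ (fun t => interp t = proj1_sig x) (proj2_sig x)).
exists (fun x => pickle (T x)) => x y /(pcan_inj pickleK) Hxy.
by apply: N_eq; rewrite -HT Hxy HT.
Qed.

End Skolem.

Definition infinite_set (P : nat -> Prop) := forall N, exists n, N <= n /\ P n.

Section Diag.
Variables (X : Type) (g : X -> nat) (x0 : X) (R : X -> nat -> Prop).
Hypothesis ginj : injective g.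

Definition hX j := epsilon (inhabits x0) (fun x => g x = j).
Lemma hXK x : hX (g x) = x.
Proof. apply: ginj; apply: (epsilon_spec _ (fun y => g y = g x)); by exists x. Qed.

Fixpoint Sset j : nat -> Prop :=
  match j with
  | 0 => fun _ => True
  | j'.+1 =>
    if excluded_middle_informative (infinite_set (fun n => Sset j' n /\ R (hX j') n))
    then fun n => Sset j' n /\ R (hX j') n
    else fun n => Sset j' n /\ ~ R (hX j') n
  end.

Lemma Sset_inf j : infinite_set (Sset j).
Proof.
elim: j => [|j IH] /=; first by move=> N; exists N.
case: excluded_middle_informative => // Hn N.
apply: NNPP => H1; apply: (Hn) => N'.
have [n [Hm1 Hm2]] := IH (maxn N N').
exists n; split; first by apply: leq_trans Hm1; apply: leq_maxr.
split => //; apply: NNPP => HR; apply: H1; exists n; split => //.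
by apply: leq_trans Hm1; apply: leq_maxl.
Qed.

Lemma Sset_S j n : Sset j.+1 n -> Sset j n.
Proof. by rewrite /=; case: excluded_middle_informative => _ []. Qed.

Lemma Sset_mono i j n : i <= j -> Sset j n -> Sset i n.
Proof.
move=> /subnK <-; elim: (j - i) => [|d IH] //= H; apply: IH; exact: Sset_S.
Qed.

Lemma Sset_truth j : exists t : bool, forall n, Sset j.+1 n -> (R (hX j) n <-> t = true).
Proof.
rewrite /=; case: excluded_middle_informative => Hc.
  by exists true => n [].
by exists false => n [_ H]; split.
Qed.

Fixpoint sq j : nat :=
  match j with
  | 0 => epsilon (inhabits 0) (fun n => Sset 1 n)
  | j'.+1 => epsilon (inhabits 0) (fun n => sq j' < n /\ Sset j.+1 n)
  end.

Lemma sq_spec j : Sset j.+1 (sq j) /\ (forall i, j = i.+1 -> sq i < sq j).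
Proof.
case: j => [|j] /=.
  split => //; apply: (epsilon_spec _ (fun n => Sset 1 n)).
  by have [n [_ H]] := Sset_inf 1 0; exists n.
have H : exists n, sq j < n /\ Sset j.+2 n.
  by have [n [H1 H2]] := Sset_inf j.+2 (sq j).+1; exists n.
have [H1 H2] := epsilon_spec (inhabits 0) (fun n => sq j < n /\ Sset j.+2 n) H.
by split => // i [<-].
Qed.

Lemma sq_incr i j : i < j -> sq i < sq j.
Proof.
elim: j => [|j IH] //; rewrite ltnS leq_eqVlt => /orP [/eqP ->|/IH H].
  exact: (sq_spec j.+1).2.
apply: ltn_trans H _; exact: (sq_spec j.+1).2.
Qed.

Lemma diag_main : exists s : nat -> nat, (forall i j, i < j -> s i < s j) /\
  forall x, exists t : bool, exists N, forall n, N <= n -> (R x (s n) <-> t = true).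
Proof.
exists sq; split; first exact: sq_incr.
move=> x; have [t Ht] := Sset_truth (g x).
exists t, (g x) => n Hn.
rewrite -{1}(hXK x); apply: Ht.
apply: (Sset_mono (j := n.+1)) => //; exact: (sq_spec n).1.
Qed.
End Diag.

Theorem claim4p4 (L : signature) (T : theory L) (k m : nat) (phi : fform L (k + m)) :
  complete_theory T -> has_IP T phi ->
  exists M : structure L,
    countable_structure M /\ is_model M T /\
    exists b : nat -> 'I_m -> M,
      (* (i) phi has IP over the sequence *)
      (forall A B : seq nat, (forall n, n \in A -> n \notin B) ->
         exists a : 'I_k -> M,
           (forall n, n \in A -> sat_xy phi a (b n)) /\
           (forall n, n \in B -> ~ sat_xy phi a (b n))) /\
      (* (ii) every a has an eventual truth value along the sequence *)
      (forall a : 'I_k -> M, exists t : bool, exists N : nat,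
         forall n, N <= n -> (sat_xy phi a (b n) <-> t = true)).
Proof.
move=> _ hIP.
have [U [UT [US [UI [U0 [UC Ucof]]]]]] := ultra_nat.
pose X j := constructive_indefinite_description _ (hIP j).
pose Mj j := proj1_sig (X j).
have Mmod j : is_model (Mj j) T := (proj2_sig (X j)).1.
pose Y j := constructive_indefinite_description _ (proj2_sig (X j)).2.
pose c j : 'I_j -> 'I_m -> Mj j := proj1_sig (Y j).
pose sh j (S : {set 'I_j}) : 'I_k -> Mj j :=
  proj1_sig (constructive_indefinite_description _ (proj2_sig (Y j) S)).
have Hsh j S (i : 'I_j) : sat_xy phi (sh j S) (c j i) <-> i \in S :=
  proj2_sig (constructive_indefinite_description _ (proj2_sig (Y j) S)) i.
pose Ul := UltS Mj UT US UI.
pose cl := @cls L Mj U UT US UI.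
pose b n (i : 'I_m) : Ul :=
  cl (fun j => oapp (fun o : 'I_j => c j o i) (witness (Mj j)) (insub n)).
pose aw (A : seq nat) (i : 'I_k) : Ul :=
  cl (fun j => sh j [set o : 'I_j | nat_of_ord o \in A] i).
have Ult_model : is_model Ul T.
  move=> s Hs e; apply/(los U0 UC); apply: (UM US UT) => j _; exact: Mmod.
have key A n : sat_xy phi (aw A) (b n) <-> n \in A.
  rewrite /sat_xy (los U0 UC).
  have Ep : U (fun j => ev (pair_env (aw A) (b n)) j =
     pair_env (sh j [set o : 'I_j | nat_of_ord o \in A])
              (fun i => oapp (fun o : 'I_j => c j o i) (witness (Mj j)) (insub n))).
    apply: (UM US (U_all UT US UI (X := fun v j => ev (pair_env (aw A) (b n)) j v =
       pair_env (sh j [set o : 'I_j | nat_of_ord o \in A])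
              (fun i => oapp (fun o : 'I_j => c j o i) (witness (Mj j)) (insub n)) v) _)).
      by move=> v; rewrite /ev /pair_env; case: (split v) => w; apply: cls_val.
    by move=> j Hj; apply: functional_extensionality => v; apply: Hj.
  have Z : U (fun j => sat phi (ev (pair_env (aw A) (b n)) j) <-> n \in A).
    apply: (UM US (UI _ _ Ep (Ucof n.+1))) => j [-> Hj].
    rewrite insubT /=; have := Hsh j [set o : 'I_j | nat_of_ord o \in A] (Sub n Hj).
    by rewrite inE /=.
  case HA: (n \in A).
    split => [_ //|_]; apply: (UM US Z) => j [_ H]; apply: H; by rewrite HA.
  split => [H|//]; exfalso; apply: U0; apply: (UM US (UI _ _ H Z)) => j [H1 [H2 _]].
  by move: (H2 H1); rewrite HA.
pose w := witness Ul.
pose base (t : nat) : Ul :=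
  match (unpickle t : option ((nat * nat) + (seq nat * nat))) with
  | Some (inl (n, i)) => oapp (fun o : 'I_m => b n o) w (insub i)
  | Some (inr (A, i)) => oapp (fun o : 'I_k => aw A o) w (insub i)
  | None => w
  end.
have Hb n i : inN base (b n i).
  have -> : b n i = base (pickle (inl (n, nat_of_ord i) : (nat * nat) + (seq nat * nat))).
    by rewrite /base pickleK /= valK.
  exact: base_in.
have Ha A i : inN base (aw A i).
  have -> : aw A i = base (pickle (inr (A, nat_of_ord i) : (nat * nat) + (seq nat * nat))).
    by rewrite /base pickleK /= valK.
  exact: base_in.
pose Nm := NS base.
pose b' n i : Nm := exist _ (b n i) (Hb n i).
pose a' A i : Nm := exist _ (aw A i) (Ha A i).
have key' A n : sat_xy phi (a' A) (b' n) <-> n \in A.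
  rewrite /sat_xy tv -key /sat_xy.
  have -> : vN (pair_env (a' A) (b' n)) = pair_env (aw A) (b n).
    by apply: functional_extensionality => v; rewrite /vN /pair_env; case: (split v).
  by [].
have [gN gNinj] := N_countable base.
pose g (a : 'I_k -> Nm) := pickle [seq gN (a i) | i <- enum 'I_k].
have ginj : injective g.
  move=> a1 a2 /(pcan_inj pickleK) H; apply: functional_extensionality => i.
  apply: gNinj.
  move/eq_in_map: H => H; apply: H; by rewrite mem_enum.

have [s [sinc sev]] := diag_main (fun _ => witness Nm) (fun a n => sat_xy phi a (b' n)) ginj.
have sinj : injective s.
  move=> x y Hxy; case: (ltngtP x y) => // /sinc; rewrite Hxy ltnn //.
exists Nm; split; first exact: N_countable.
split.
  move=> t Ht e; apply/tv; exact: Ult_model.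
exists (fun n => b' (s n)); split; last exact: sev.
move=> A B HAB; exists (a' (map s A)); split.
  by move=> n Hn; apply/key'; rewrite mem_map.
move=> n Hn /key'; rewrite mem_map // => HnA.
by move: (HAB n HnA); rewrite Hn.
Qed.
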